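(* Assume the standing conventions of the context. Let $\Psi'=\binom{c_k}{d_l}$ be a consecutive pair in $Z'_{\mathrm I}$ (so $l\in\{k-1,k\}$), and suppose $\mathcal D_{Z,Z'}\neq\emptyset$. Then $(Z,\Lambda_{\Psi'})\in\mathcal D_{Z,Z'}$ if and only if \[ \begin{cases} a_k>c_k\text{ and }d_k\geq b_k, & \text{if $m'=m$ and $l=k$};\\ c_k\geq a_k\text{ and }b_{k-1}>d_{k-1}, & \text{if $m'=m$ and $l=k-1$};\\ a_k\geq c_k\text{ and }d_k>b_k, & \text{if $m'=m+1$ and $l=k$};\\ c_k>a_k\text{ and }b_{k-1}\geq d_{k-1}, & \text{if $m'=m+1$ and $l=k-1$}. \end{cases} \]
   Context: A symbol is an array $\Lambda=\binom{a'_1,\ldots,a'_{m_1}}{b'_1,\ldots,b'_{m_2}}$ of two strictly decreasing finite sequences of nonnegative integers (top row, bottom row); its defect is $\mathrm{def}(\Lambda)=m_1-m_2$. Standing assumptions: $Z=\binom{a_1,\ldots,a_{m+1}}{b_1,\ldots,b_m}$ is a special symbol of defect $1$, i.e. $a_1\ge b_1\ge a_2\ge b_2\ge\cdots\ge b_m\ge a_{m+1}$; $Z'=\binom{c_1,\ldots,c_{m'}}{d_1,\ldots,d_{m'}}$ is a special symbol of defect $0$, i.e. $c_1\ge d_1\ge c_2\ge d_2\ge\cdots\ge c_{m'}\ge d_{m'}$; and $m'\in\{m,m+1\}$. For a symbol $Y$, $Y_{\mathrm I}$ is the set of entries of $Y$ occurring in exactly one row. For $M\subset Z_{\mathrm I}$,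 $\Lambda_M$ is the symbol obtained from $Z$ by moving every entry of $M$ to the other row (rows re-sorted decreasingly); for $N\subset Z'_{\mathrm I}$, $\Lambda_N$ is obtained from $Z'$ in the same way. $\overline{\mathcal S}_Z=\{\Lambda_M: M\subset Z_{\mathrm I}\}$, $\overline{\mathcal S}_{Z'}=\{\Lambda_N:N\subset Z'_{\mathrm I}\}$; $\mathcal S_{Z,1}$ (resp. $\mathcal S_{Z',0}$) is the set of elements of $\overline{\mathcal S}_Z$ of defect $1$ (resp. of $\overline{\mathcal S}_{Z'}$ of defect $0$). A consecutive pair in $Z'_{\mathrm I}$ is a two-element subset $\{c_k,d_l\}\subset Z'_{\mathrm I}$, written $\binom{c_k}{d_l}$, with $l\in\{k-1,k\}$; a consecutive pair in $Z_{\mathrm I}$ is $\{a_k,b_l\}\subset Z_{\mathrm I}$, written $\binom{a_k}{b_l}$, with $l\in\{k-1,k\}$. Relation $\overline{\mathcal B}^+_{Z,Z'}\subset\overline{\mathcal S}_Z\times\overline{\mathcal S}_{Z'}$: for $\Lambda=\binom{a'_1,\ldots,a'_{m_1}}{b'_1,\ldots,b'_{m_2}}\in\overline{\mathcal S}_Z$ and $\Lambda'=\binom{c'_1,\ldots,c'_{m'_1}}{d'_1,\ldots,d'_{m'_2}}\in\overline{\mathcal S}_{Z'}$, $(\Lambda,\Lambda')\in\overline{\mathcal B}^+_{Z,Z'}$ iff $\mathrm{def}(\Lambda')=1-\mathrm{def}(\Lambda)$ and: if $m'=m$, $a'_i>d'_i\ge a'_{i+1}$ for $1\le i\le m'_2$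 and $b'_{i-1}>c'_i\ge b'_i$ for $1\le i\le m'_1$; if $m'=m+1$, $a'_i\ge d'_i>a'_{i+1}$ for $1\le i\le m'_2$ and $b'_{i-1}\ge c'_i>b'_i$ for $1\le i\le m'_1$; here $b'_0=+\infty$ and nonexistent entries $a'_j,b'_j$ beyond the row lengths are $-\infty$. Then $\mathcal D_{Z,Z'}=\overline{\mathcal B}^+_{Z,Z'}\cap(\mathcal S_{Z,1}\times\mathcal S_{Z',0})$. *)

(* Defs.v *)
From mathcomp Require Import all_boot all_order all_algebra.
Set Implicit Arguments. Unset Strict Implicit. Unset Printing Implicit Defensive.
Import GRing.Theory Num.Theory.

(* A symbol: (top row, bottom row), each a strictly decreasing seq of nats. *)
Definition symbol := (seq nat * seq nat)%type.

Definition defect (L : symbol) : int := ((size L.1)%:Z - (size L.2)%:Z)%R.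

Definition strdec (s : seq nat) : bool := sorted (fun x y => y < x) s.

(* 1-based entry of a row (natural number, only used for in-range indices) *)
Definition e (s : seq nat) (i : nat) : nat := nth 0 s i.-1.

(* extended entries: nonexistent entries are -oo, b'_0 = +oo *)
Inductive ext := NegInf | Fin of nat | PosInf.

Definition ext_le (x y : ext) : bool :=
  match x, y with
  | NegInf, _ => true
  | _, PosInf => true
  | Fin a, Fin b => a <= b
  | _, _ => false
  end.
Definition ext_lt (x y : ext) : bool := ~~ ext_le y x.

Definition ent (s : seq nat) (i : nat) : ext :=
  if (0 < i) && (i <= size s) then Fin (nth 0 s i.-1) else NegInf.
Definition entb (s : seq nat) (i : nat) : ext :=
  if i == 0 then PosInf else ent s i.

(* Y_I : entries occurring in exactly one row *)
Definition singles (L : symbol) : seq nat :=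
  [seq x <- L.1 ++ L.2 | (x \in L.1) != (x \in L.2)].

(* Lambda_M : move every entry of M to the other row, rows re-sorted decreasingly *)
Definition move (L : symbol) (M : seq nat) : symbol :=
  (sort (fun x y => y <= x) ([seq x <- L.1 | x \notin M] ++ [seq x <- L.2 | x \in M]),
   sort (fun x y => y <= x) ([seq x <- L.2 | x \notin M] ++ [seq x <- L.1 | x \in M])).

Definition Sbar (Z L : symbol) : Prop :=
  exists M : seq nat, {subset M <= singles Z} /\ L = move Z M.

Definition special1 (Z : symbol) (m : nat) : Prop :=
  [/\ size Z.1 = m.+1, size Z.2 = m, strdec Z.1, strdec Z.2 &
      (forall i, 1 <= i <= m -> e Z.2 i <= e Z.1 i /\ e Z.1 i.+1 <= e Z.2 i)].

Definition special0 (Z' : symbol) (m' : nat) : Prop :=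
  [/\ size Z'.1 = m', size Z'.2 = m', strdec Z'.1,
      strdec Z'.2 &
      (forall i, 1 <= i <= m' -> e Z'.2 i <= e Z'.1 i) /\
      (forall i, 1 <= i < m' -> e Z'.1 i.+1 <= e Z'.2 i)].

(* the relation \bar B^+_{Z,Z'}; m = size Z.2, m' = size Z'.1 *)
Definition Bplus (Z Z' L L' : symbol) : Prop :=
  defect L' = (1 - defect L)%R /\
  if size Z'.1 == size Z.2 then
    (forall i, 1 <= i <= size L'.2 ->
       ext_lt (ent L'.2 i) (ent L.1 i) /\ ext_le (ent L.1 i.+1) (ent L'.2 i)) /\
    (forall i, 1 <= i <= size L'.1 ->
       ext_lt (ent L'.1 i) (entb L.2 i.-1) /\ ext_le (ent L.2 i) (ent L'.1 i))
  else
    (forall i, 1 <= i <= size L'.2 ->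
       ext_le (ent L'.2 i) (ent L.1 i) /\ ext_lt (ent L.1 i.+1) (ent L'.2 i)) /\
    (forall i, 1 <= i <= size L'.1 ->
       ext_le (ent L'.1 i) (entb L.2 i.-1) /\ ext_lt (ent L.2 i) (ent L'.1 i)).

(* D_{Z,Z'} = \bar B^+_{Z,Z'} ∩ (S_{Z,1} × S_{Z',0}) *)
Definition Dset (Z Z' L L' : symbol) : Prop :=
  [/\ Bplus Z Z' L L', Sbar Z L /\ defect L = 1%R & Sbar Z' L' /\ defect L' = 0%R].

(* Main.v *)
Require Import Defs.
From mathcomp Require Import all_boot all_order all_algebra zify.

Definition geS (s : seq nat) := sorted (fun x y => y <= x) s.
Definition cnt (s : seq nat) (x : nat) := count (fun y => x <= y) s.

Lemma strdec_geS {s} : strdec s -> geS s.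
Proof. by apply: sub_sorted => x y /ltnW. Qed.

Lemma cnt_size s x : cnt s x <= size s.
Proof. exact: count_size. Qed.

Lemma geS_trans : transitive (fun x y : nat => y <= x).
Proof. by move=> x y z /= h1 h2; apply: leq_trans h2 h1. Qed.

Lemma nth_cnt s x i : geS s -> i < size s -> (x <= nth 0 s i) = (i < cnt s x).
Proof.
elim: s i => [|y t IH] i //= Hs Hi.
have /andP [Ha Ht] : all (fun z => z <= y) t && geS t.
  by move: Hs; rewrite /geS /= (path_sortedE geS_trans).
have H0 : x > y -> cnt t x = 0.
  move=> xy; apply/eqP; rewrite -leqn0 leqNgt -has_count; apply/hasPn => z zt.
  by rewrite -ltnNge (leq_ltn_trans _ xy) //; move/allP: Ha => /(_ z zt).
case: i Hi => [|i] Hi /=.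
  case: (leqP x y) => xy; first by rewrite add1n.
  by rewrite H0.
case: (leqP x y) => xy.
  by rewrite add1n ltnS IH.
rewrite H0 // add0n ltn0; apply/negbTE; rewrite -ltnNge.
apply: leq_ltn_trans xy; move/allP: Ha; apply; exact: mem_nth.
Qed.

Lemma entP s x i : geS s -> 0 < i -> ext_le (Fin x) (ent s i) = (i <= cnt s x).
Proof.
move=> Hs Hi; rewrite /ent Hi /=.
case: leqP => Hz /=.
  by rewrite nth_cnt ?prednK // (leq_trans _ Hz) // prednK.
apply/esym/negbTE; rewrite -ltnNge; exact: leq_ltn_trans (cnt_size _ _) Hz.
Qed.

Lemma entbP s x i : geS s -> ext_le (Fin x) (entb s i) = (i <= cnt s x).
Proof. move=> Hs; case: i => [|i] //; have -> : entb s i.+1 = ent s i.+1 by []; by rewrite entP. Qed.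

Lemma ent_entb s i : 0 < i -> entb s i = ent s i.
Proof. by case: i. Qed.

Lemma ent_fin s i : 0 < i <= size s -> ent s i = Fin (nth 0 s i.-1).
Proof. by rewrite /ent => ->. Qed.

Lemma ent_notPos s i : ent s i <> PosInf.
Proof. by rewrite /ent; case: ifP. Qed.

Lemma ext_le_trans y x z : ext_le x y -> ext_le y z -> ext_le x z.
Proof. by case: x; case: y; case: z => //= a b c; apply: leq_trans. Qed.
Lemma ext_lt_le_trans y x z : ext_lt x y -> ext_le y z -> ext_lt x z.
Proof. rewrite /ext_lt; case: x; case: y; case: z => //= *; lia. Qed.
Lemma ext_le_lt_trans y x z : ext_le x y -> ext_lt y z -> ext_lt x z.
Proof. rewrite /ext_lt; case: x; case: y; case: z => //= *; lia. Qed.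

Lemma lt_fin_via e1 e2 x : ext_lt e1 e2 -> ext_le (Fin x) e1 -> ext_le (Fin x.+1) e2.
Proof. rewrite /ext_lt; case: e1; case: e2 => //= *; lia. Qed.

Lemma le_from e1 e2 : e1 <> PosInf -> (forall x, ext_le (Fin x) e1 -> ext_le (Fin x) e2) -> ext_le e1 e2.
Proof. by case: e1 => // a _ H; apply: H => /=. Qed.

Lemma lt_from e1 e2 : e1 <> PosInf -> e2 <> NegInf ->
  (forall x, ext_le (Fin x) e1 -> ext_le (Fin x.+1) e2) -> ext_lt e1 e2.
Proof.
rewrite /ext_lt; case: e1 => [| a|] // _; case: e2 => //= b _ H.
by rewrite -ltnNge; apply: (H a).
Qed.

Lemma HL_le {u v i j x} : geS u -> geS v -> 0 < i ->
  ext_le (ent u i) (entb v j) -> i <= cnt u x -> j <= cnt v x.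
Proof.
move=> Hu Hv Hi H Hc; rewrite -entbP //; apply: ext_le_trans H.
by rewrite entP.
Qed.

Lemma HL_lt {u v i j x} : geS u -> geS v -> 0 < i ->
  ext_lt (ent u i) (entb v j) -> i <= cnt u x -> j <= cnt v x.+1.
Proof.
move=> Hu Hv Hi H Hc; rewrite -entbP //; apply: lt_fin_via H _.
by rewrite entP.
Qed.

Lemma HR_le u v i j : geS u -> geS v -> 0 < i ->
  (forall x, i <= cnt u x -> j <= cnt v x) -> ext_le (ent u i) (entb v j).
Proof.
move=> Hu Hv Hi H; apply: le_from; first exact: ent_notPos.
by move=> x; rewrite entP // entbP //; apply: H.
Qed.

Lemma HR_lt u v i j : geS u -> geS v -> 0 < i -> entb v j <> NegInf ->
  (forall x, i <= cnt u x -> j <= cnt v x.+1) -> ext_lt (ent u i) (entb v j).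
Proof.
move=> Hu Hv Hi Hn H; apply: lt_from => //; first exact: ent_notPos.
by move=> x; rewrite entP // entbP //; apply: H.
Qed.

Lemma count_split (P q : pred nat) s :
  count P [seq x <- s | ~~ q x] + count P [seq x <- s | q x] = count P s.
Proof. elim: s => //= y s IH; case: (q y) => /=; lia. Qed.

Lemma move_count L M P : count P (move L M).1 + count P (move L M).2 = count P L.1 + count P L.2.
Proof.
rewrite /move /= !count_sort !count_cat.
have h1 := count_split P (fun x => x \in M) L.1.
have h2 := count_split P (fun x => x \in M) L.2.
simpl in h1, h2. rewrite -h1 -h2. lia.
Qed.

Lemma move_sorted L M : geS (move L M).1 /\ geS (move L M).2.
Proof. by split; apply: sort_sorted => x y; apply: leq_total. Qed.

Lemma Sbar_facts {Z L} : Sbar Z L ->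
  [/\ geS L.1, geS L.2 & forall P, count P L.1 + count P L.2 = count P Z.1 + count P Z.2].
Proof.
case=> M [_ ->]; have [h1 h2] := move_sorted Z M; split => // P; exact: move_count.
Qed.

Lemma entb_nonNeg s j : j <= size s -> entb s j <> NegInf.
Proof. case: j => // j Hj; rewrite ent_entb // ent_fin //. Qed.

Lemma special1_cnt {Z m} : special1 Z m -> forall x,
  cnt Z.2 x <= cnt Z.1 x /\ cnt Z.1 x <= (cnt Z.2 x).+1.
Proof.
case=> s1 s2 d1 d2 H x; have g1 := strdec_geS d1; have g2 := strdec_geS d2.
split.
- case E: (cnt Z.2 x) => [|i] //.
  have Hi : i.+1 <= m by rewrite -s2 -E cnt_size.
  have [h _] := H i.+1 Hi.
  apply: (@HL_le Z.2 Z.1 i.+1) => //; last by rewrite E.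
  by rewrite ent_entb // !ent_fin ?s1 ?s2 //; apply: leq_trans Hi _.
- case E: (cnt Z.1 x) => [|[|i]] //.
  have Hi : i.+1 <= m by rewrite -ltnS -s1 -E cnt_size.
  have [_ h] := H i.+1 Hi.
  suff : i.+1 <= cnt Z.2 x by [].
  apply: (@HL_le Z.1 Z.2 i.+2) => //; last by rewrite E.
  by rewrite ent_entb // !ent_fin ?s1 ?s2.
Qed.

Lemma special0_cnt {Z m} : special0 Z m -> forall x,
  cnt Z.2 x <= cnt Z.1 x /\ cnt Z.1 x <= (cnt Z.2 x).+1.
Proof.
case=> s1 s2 d1 d2 [H H'] x; have g1 := strdec_geS d1; have g2 := strdec_geS d2.
split.
- case E: (cnt Z.2 x) => [|i] //.
  have Hi : i.+1 <= m by rewrite -s2 -E cnt_size.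
  have h := H i.+1 Hi.
  apply: (@HL_le Z.2 Z.1 i.+1) => //; last by rewrite E.
  by rewrite ent_entb // !ent_fin ?s1 ?s2.
- case E: (cnt Z.1 x) => [|[|i]] //.
  have Hi : i.+2 <= m by rewrite -s1 -E cnt_size.
  have h := H' i.+1 Hi.
  suff : i.+1 <= cnt Z.2 x by [].
  apply: (@HL_le Z.1 Z.2 i.+2) => //; last by rewrite E.
  by rewrite ent_entb // !ent_fin ?s1 ?s2 //; apply: ltnW.
Qed.

Lemma sp0_le1 {Z m i} : special0 Z m -> 0 < i <= m -> ext_le (ent Z.2 i) (ent Z.1 i).
Proof.
case=> s1 s2 _ _ [H _] Hi; rewrite !ent_fin ?s1 ?s2 //=.
by have := H i Hi; rewrite /e.
Qed.

Lemma sp0_le2 {Z m i} : special0 Z m -> 0 < i < m -> ext_le (ent Z.1 i.+1) (ent Z.2 i).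
Proof.
case=> s1 s2 _ _ [_ H] Hi; rewrite !ent_fin ?s1 ?s2 //=; last by lia.
  by have := H i Hi; rewrite /e.
by lia.
Qed.

Lemma def1 {L} : defect L = 1%R -> size L.1 = (size L.2).+1.
Proof. rewrite /defect; lia. Qed.
Lemma def0 {L} : defect L = 0%R -> size L.1 = size L.2.
Proof. rewrite /defect; lia. Qed.
Lemma defZ {Z Z' : symbol} {m m'} : size Z.1 = m.+1 -> size Z.2 = m -> size Z'.1 = m' -> size Z'.2 = m' -> defect Z' = (1 - defect Z)%R.
Proof. rewrite /defect => -> -> -> ->. lia. Qed.

Lemma predn_le i n : i <= n.+1 -> i.-1 <= n.
Proof. by case: i. Qed.

Lemma ar_eq {a b c d a' b' c' d' : nat -> nat} :
  (forall x, d' x <= a' x.+1) -> (forall x, a' x <= (d' x).+1) ->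
  (forall x, c' x <= (b' x.+1).+1) -> (forall x, b' x <= c' x) ->
  (forall x, a' x + b' x = a x + b x) -> (forall x, c' x + d' x = c x + d x) ->
  (forall x, b x <= a x /\ a x <= (b x).+1) -> (forall x, d x <= c x /\ c x <= (d x).+1) ->
  forall x, [/\ d x <= a x.+1, a x <= (d x).+1, c x <= (b x.+1).+1 & b x <= c x].
Proof.
move=> h1 h2 h3 h4 h5 h6 h7 h8 x.
have := h1 x; have := h2 x; have := h3 x; have := h4 x; have := h5 x; have := h6 x;
have := h7 x; have := h8 x; have := h1 x.+1; have := h2 x.+1; have := h3 x.+1;
have := h4 x.+1; have := h5 x.+1; have := h6 x.+1; have := h7 x.+1; have := h8 x.+1.
clear h1 h2 h3 h4 h5 h6 h7 h8; move=> *; split; lia.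
Qed.

Lemma ar_ne {a b c d a' b' c' d' : nat -> nat} :
  (forall x, d' x <= a' x) -> (forall x, a' x <= (d' x.+1).+1) ->
  (forall x, c' x <= (b' x).+1) -> (forall x, b' x <= c' x.+1) ->
  (forall x, a' x + b' x = a x + b x) -> (forall x, c' x + d' x = c x + d x) ->
  (forall x, b x <= a x /\ a x <= (b x).+1) -> (forall x, d x <= c x /\ c x <= (d x).+1) ->
  forall x, [/\ d x <= a x, a x <= (d x.+1).+1, c x <= (b x).+1 & b x <= c x.+1].
Proof.
move=> h1 h2 h3 h4 h5 h6 h7 h8 x.
have := h1 x; have := h2 x; have := h3 x; have := h4 x; have := h5 x; have := h6 x;
have := h7 x; have := h8 x; have := h1 x.+1; have := h2 x.+1; have := h3 x.+1;
have := h4 x.+1; have := h5 x.+1; have := h6 x.+1; have := h7 x.+1; have := h8 x.+1.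
clear h1 h2 h3 h4 h5 h6 h7 h8; move=> *; split; lia.
Qed.

Lemma lemA {m m' Z Z' L L'} : special1 Z m -> special0 Z' m' -> (m' = m \/ m' = m.+1) ->
  Dset Z Z' L L' -> Bplus Z Z' Z Z'.
Proof.
move=> sZ sZ' hm [[_ HB] [SL dL] [SL' dL']].
have [g1 g2 cL] := Sbar_facts SL; have [g1' g2' cL'] := Sbar_facts SL'.
case: (sZ) => s1 s2 d1 d2 _; case: (sZ') => s1' s2' d1' d2' _.
have z1 := strdec_geS d1; have z2 := strdec_geS d2.
have z1' := strdec_geS d1'; have z2' := strdec_geS d2'.
have [sL1 sL2] : size L.1 = m.+1 /\ size L.2 = m.
  have := cL predT; rewrite !count_predT s1 s2 => h; have h' := def1 dL; clear -h h'; lia.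
have [sL1' sL2'] : size L'.1 = m' /\ size L'.2 = m'.
  have := cL' predT; rewrite !count_predT s1' s2' => h; have h' := def0 dL'; clear -h h'; lia.
have cz := special1_cnt sZ; have cz' := special0_cnt sZ'.
have sumZ x : cnt L.1 x + cnt L.2 x = cnt Z.1 x + cnt Z.2 x := cL _.
have sumZ' x : cnt L'.1 x + cnt L'.2 x = cnt Z'.1 x + cnt Z'.2 x := cL' _.
clear dL dL'.
rewrite /Bplus; split; first exact: (defZ s1 s2 s1' s2').
move: HB; rewrite s1' s2' s2 sL1' sL2'; case: hm => Hm; rewrite Hm in s1' s2' sL1' sL2' *; clear Hm.
- rewrite eqxx => -[H1 H2].
  have c1 x : cnt L'.2 x <= cnt L.1 x.+1.
    case E: (cnt L'.2 x) => [|i] //.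
    have Hi : i.+1 <= m by rewrite -sL2' -E cnt_size.
    have [h _] := H1 i.+1 Hi.
    rewrite -(@ent_entb L.1 i.+1) // in h.
    by have := HL_lt g2' g1 _ h (eq_leq (esym E)); apply.
  have c2 x : cnt L.1 x <= (cnt L'.2 x).+1.
    case E: (cnt L.1 x) => [|[|i]] //.
    have Hi : i.+1 <= m by rewrite -ltnS -sL1 -E cnt_size.
    have [_ h] := H1 i.+1 Hi.
    rewrite -(@ent_entb L'.2 i.+1) // in h.
    by have := HL_le g1 g2' _ h (eq_leq (esym E)); apply.
  have c3 x : cnt L'.1 x <= (cnt L.2 x.+1).+1.
    case E: (cnt L'.1 x) => [|[|i]] //.
    have Hi : i.+2 <= m by rewrite -sL1' -E cnt_size.
    have [h _] := H2 i.+2 Hi.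
    by have := HL_lt g1' g2 _ h (eq_leq (esym E)); apply.
  have c4 x : cnt L.2 x <= cnt L'.1 x.
    case E: (cnt L.2 x) => [|i] //.
    have Hi : i.+1 <= m by rewrite -sL2 -E cnt_size.
    have [_ h] := H2 i.+1 Hi.
    rewrite -(@ent_entb L'.1 i.+1) // in h.
    by have := HL_le g2 g1' _ h (eq_leq (esym E)); apply.
  have T := ar_eq c1 c2 c3 c4 sumZ sumZ' cz cz'.
  split=> i /andP [Hi0 Him]; split.
  + rewrite -(@ent_entb Z.1 i) //.
    apply: HR_lt => //; first by apply: entb_nonNeg; rewrite s1 (leq_trans Him).
    by move=> x hx; have [t _ _ _] := T x; apply: leq_trans hx t.
  + rewrite -(@ent_entb Z'.2 i) //.
    by apply: HR_le => // x hx; have [_ t _ _] := T x; rewrite -ltnS (leq_trans hx t).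
  + apply: HR_lt => //; first by apply: entb_nonNeg; rewrite s2 (leq_trans (leq_pred _) Him).
    by move=> x hx; have [_ _ t _] := T x; apply: predn_le (leq_trans hx t).
  + rewrite -(@ent_entb Z'.1 i) //.
    by apply: HR_le => // x hx; have [_ _ _ t] := T x; apply: leq_trans hx t.
- have -> : (m.+1 == m) = false by rewrite eqn_leq ltnn.
  move=> [H1 H2].
  have c1 x : cnt L'.2 x <= cnt L.1 x.
    case E: (cnt L'.2 x) => [|i] //.
    have Hi : i.+1 <= m.+1 by rewrite -sL2' -E cnt_size.
    have [h _] := H1 i.+1 Hi.
    rewrite -(@ent_entb L.1 i.+1) // in h.
    by have := HL_le g2' g1 _ h (eq_leq (esym E)); apply.
  have c2 x : cnt L.1 x <= (cnt L'.2 x.+1).+1.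
    case E: (cnt L.1 x) => [|[|i]] //.
    have Hi : i.+1 <= m by rewrite -ltnS -sL1 -E cnt_size.
    have [_ h] := H1 i.+1 (ltnW Hi).
    rewrite -(@ent_entb L'.2 i.+1) // in h.
    by have := HL_lt g1 g2' _ h (eq_leq (esym E)); apply.
  have c3 x : cnt L'.1 x <= (cnt L.2 x).+1.
    case E: (cnt L'.1 x) => [|[|i]] //.
    have Hi : i.+2 <= m.+1 by rewrite -sL1' -E cnt_size.
    have [h _] := H2 i.+2 Hi.
    by have := HL_le g1' g2 _ h (eq_leq (esym E)); apply.
  have c4 x : cnt L.2 x <= cnt L'.1 x.+1.
    case E: (cnt L.2 x) => [|i] //.
    have Hi : i.+1 <= m by rewrite -sL2 -E cnt_size.
    have [_ h] := H2 i.+1 (leqW Hi).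
    rewrite -(@ent_entb L'.1 i.+1) // in h.
    by have := HL_lt g2 g1' _ h (eq_leq (esym E)); apply.
  have T := ar_ne c1 c2 c3 c4 sumZ sumZ' cz cz'.
  split=> i /andP [Hi0 Him]; split.
  + rewrite -(@ent_entb Z.1 i) //.
    by apply: HR_le => // x hx; have [t _ _ _] := T x; apply: leq_trans hx t.
  + rewrite -(@ent_entb Z'.2 i) //.
    apply: HR_lt => //; first by apply: entb_nonNeg; rewrite s2'.
    by move=> x hx; have [_ t _ _] := T x; rewrite -ltnS (leq_trans hx t).
  + by apply: HR_le => // x hx; have [_ _ t _] := T x; apply: predn_le (leq_trans hx t).
  + rewrite -(@ent_entb Z'.1 i) //.
    apply: HR_lt => //; first by apply: entb_nonNeg; rewrite s1'.
    by move=> x hx; have [_ _ _ t] := T x; apply: leq_trans hx t.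
Qed.

Definition Wz (Z : symbol) j := if odd j then nth 0 Z.2 j./2 else nth 0 Z.1 j./2.

Lemma W_even Z i : Wz Z i.*2 = nth 0 Z.1 i.
Proof. by rewrite /Wz odd_double doubleK. Qed.

Lemma W_odd Z i : Wz Z i.*2.+1 = nth 0 Z.2 i.
Proof. by rewrite /Wz /= odd_double /= uphalf_double. Qed.

Lemma W_step {Z m q} : special0 Z m -> q.+1 < m.*2 -> Wz Z q.+1 <= Wz Z q.
Proof.
case=> _ _ _ _ [H H']; rewrite -[q]odd_double_half; case: (odd q); set i := q./2.
- rewrite add1n -doubleS W_even W_odd => hq.
  have := H' i.+1; rewrite /e /=; apply; rewrite /=; lia.
- rewrite add0n W_even W_odd => hq.
  have := H i.+1; rewrite /e /=; apply; rewrite /=; lia.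
Qed.

Lemma W_mono {Z m p q} : special0 Z m -> p <= q -> q < m.*2 -> Wz Z q <= Wz Z p.
Proof.
move=> sZ; elim: q => [|q IH] hpq hq.
  by move: hpq; rewrite leqn0 => /eqP ->.
case: (eqVneq p q.+1) => [->//|ne].
have hpq' : p <= q by rewrite -ltnS ltn_neqAle ne hpq.
exact: leq_trans (W_step sZ hq) (IH hpq' (ltnW hq)).
Qed.

Lemma lt_pred k m : 0 < k -> k <= m -> k.-1 < m.
Proof. by case: k. Qed.

Lemma perm_swap1 (s t M : seq nat) j d : uniq s -> j < size s -> d \notin s ->
  uniq t -> d \in t -> nth 0 s j \notin t ->
  (forall x, (x \in M) = (x == nth 0 s j) || (x == d)) ->
  perm_eq ([seq x <- s | x \notin M] ++ [seq x <- t | x \in M]) (set_nth 0 s j d).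
Proof.
move=> Us Hj Hd Ut Hdt Hc HM.
have -> : [seq x <- s | x \notin M] = rem (nth 0 s j) s.
  rewrite rem_filter //; apply: eq_in_filter => x xs; rewrite HM /=.
  have -> : (x == d) = false by apply/eqP => xd; rewrite -xd xs in Hd.
  by rewrite orbF.
have -> : [seq x <- t | x \in M] = [:: d].
  rewrite -(filter_pred1_uniq Ut Hdt); apply: eq_in_filter => x xt; rewrite HM.
  have -> : (x == nth 0 s j) = false by apply/eqP => xd; rewrite -xd xt in Hc.
  by [].
rewrite remE index_uniq // set_nthE Hj -catA perm_cat2l.
by rewrite perm_catC.
Qed.

Lemma sort_perm_sorted (s t : seq nat) : perm_eq s t -> geS t ->
  sort (fun x y => y <= x) s = t.
Proof.
move=> P St; rewrite -(sorted_sort geS_trans St); apply/perm_sortP => //.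
- by move=> x y; apply: leq_total.
- exact: geS_trans.
- by move=> x y /andP [h1 h2]; apply/eqP; rewrite eqn_leq h1 h2.
Qed.

Lemma geS_set_nth s j d : geS s -> j < size s ->
  (0 < j -> d <= nth 0 s j.-1) -> (j.+1 < size s -> nth 0 s j.+1 <= d) ->
  geS (set_nth 0 s j d).
Proof.
move=> Ss Hj H1 H2; have /(sortedP 0) Hs := Ss.
apply/(sortedP 0) => i; rewrite size_set_nth (maxn_idPr Hj) => hi.
rewrite !nth_set_nth /=.
case: (eqVneq i j) => [eij|nij]; case: (eqVneq i.+1 j) => [eij'|nij'].
- by rewrite eij in eij'; move: eij'; rewrite -[X in _ = X]addn0 => /eqP; rewrite -addn1 eqn_add2l.
- by subst i; apply: H2.
- by subst j; apply: H1.
- exact: Hs.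
Qed.

Lemma ent_set s j d i : j < size s ->
  ent (set_nth 0 s j d) i = if i == j.+1 then Fin d else ent s i.
Proof.
move=> Hj; rewrite /ent size_set_nth (maxn_idPr Hj).
case: i => [|i] //=; rewrite eqSS nth_set_nth /=.
by case: eqP => // ->; rewrite Hj.
Qed.

Lemma move_nil L : geS L.1 -> geS L.2 -> move L [::] = L.
Proof.
case: L => a b /= ha hb; rewrite /move /=.
have -> : [seq x <- a | x \notin [::]] = a by rewrite (eq_filter (a2 := predT)) // filter_predT.
have -> : [seq x <- b | x \notin [::]] = b by rewrite (eq_filter (a2 := predT)) // filter_predT.
have -> : [seq x <- b | x \in [::]] = [::] by rewrite (eq_filter (a2 := pred0)) // filter_pred0.
have -> : [seq x <- a | x \in [::]] = [::] by rewrite (eq_filter (a2 := pred0)) // filter_pred0.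
by rewrite !cats0 !sorted_sort //; apply: geS_trans.
Qed.

Lemma defect_sz (L : symbol) a b : size L.1 = a -> size L.2 = b -> defect L = (a%:Z - b%:Z)%R.
Proof. by rewrite /defect => -> ->. Qed.

Lemma Wfacts {Z m k l} : special0 Z m -> 0 < k -> k <= m -> 0 < l -> l <= m -> (l = k \/ l.+1 = k) ->
 [/\ (0 < k.-1 -> nth 0 Z.2 l.-1 <= nth 0 Z.1 k.-1.-1),
     (k.-1.+1 < m -> nth 0 Z.1 k.-1.+1 <= nth 0 Z.2 l.-1),
     (0 < l.-1 -> nth 0 Z.1 k.-1 <= nth 0 Z.2 l.-1.-1) &
     (l.-1.+1 < m -> nth 0 Z.2 l.-1.+1 <= nth 0 Z.1 k.-1)].
Proof.
move=> sZ hk0 hkm hl0 hlm hlk; split=> h; rewrite -!W_even -!W_odd; apply: (W_mono sZ).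
all: clear sZ; lia.
Qed.

Lemma def_one {Z : symbol} {m} : size Z.1 = m.+1 -> size Z.2 = m -> defect Z = 1%R.
Proof. rewrite /defect => -> ->; lia. Qed.
Lemma def_zero {Z : symbol} {m} : size Z.1 = m -> size Z.2 = m -> defect Z = 0%R.
Proof. rewrite /defect => -> ->; lia. Qed.

Theorem lemma0301 (m m' : nat) (Z Z' : symbol) (k l : nat) :
  special1 Z m -> special0 Z' m' -> (m' = m \/ m' = m.+1) ->
  1 <= k <= m' -> 1 <= l <= m' -> (l = k \/ l.+1 = k) ->
  e Z'.1 k \in singles Z' -> e Z'.2 l \in singles Z' ->
  (exists L L', Dset Z Z' L L') ->
  (Dset Z Z' Z (move Z' [:: e Z'.1 k; e Z'.2 l]) <->
   if m' == m then
     (if l == k then ext_lt (ent Z'.1 k) (ent Z.1 k) && ext_le (ent Z.2 k) (ent Z'.2 k)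
      else ext_le (ent Z.1 k) (ent Z'.1 k) && ext_lt (ent Z'.2 k.-1) (ent Z.2 k.-1))
   else
     (if l == k then ext_le (ent Z'.1 k) (ent Z.1 k) && ext_lt (ent Z.2 k) (ent Z'.2 k)
      else ext_lt (ent Z.1 k) (ent Z'.1 k) && ext_le (ent Z'.2 k.-1) (ent Z.2 k.-1))).
Proof.
move=> sZ sZ' hm /andP[hk0 hkm] /andP[hl0 hlm] hlk Hc Hd [L [L' HD]].
have BA := lemA sZ sZ' hm HD.
case: (sZ) => s1 s2 d1 d2 _.
case: (sZ') => s1' s2' d1' d2' _.
have z1 := strdec_geS d1; have z2 := strdec_geS d2.
have z1' := strdec_geS d1'; have z2' := strdec_geS d2'.
have ltr : transitive (fun x y : nat => y < x) by move=> x y z h1 h2; apply: ltn_trans h2 h1.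
have u1 : uniq Z'.1 := sorted_uniq ltr (fun x => ltnn x) d1'.
have u2 : uniq Z'.2 := sorted_uniq ltr (fun x => ltnn x) d2'.
have hk1 : k.-1 < size Z'.1 by rewrite s1' lt_pred.
have hl1 : l.-1 < size Z'.2 by rewrite s2' lt_pred.
rewrite /e in Hc Hd *.
have cin : nth 0 Z'.1 k.-1 \in Z'.1 := mem_nth 0 hk1.
have din : nth 0 Z'.2 l.-1 \in Z'.2 := mem_nth 0 hl1.
have cnot : nth 0 Z'.1 k.-1 \notin Z'.2.
  by move: Hc; rewrite /singles mem_filter cin /=; case: (_ \in Z'.2).
have dnot : nth 0 Z'.2 l.-1 \notin Z'.1.
  by move: Hd; rewrite /singles mem_filter din /=; case: (_ \in Z'.1).
have [WF1 WF2 WF3 WF4] := Wfacts sZ' hk0 hkm hl0 hlm hlk.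
have EL : move Z' [:: nth 0 Z'.1 k.-1; nth 0 Z'.2 l.-1] =
   (set_nth 0 Z'.1 k.-1 (nth 0 Z'.2 l.-1), set_nth 0 Z'.2 l.-1 (nth 0 Z'.1 k.-1)).
  rewrite /move; congr pair; apply: sort_perm_sorted.
  - by apply: perm_swap1 => // x; rewrite !inE.
  - by apply: geS_set_nth => //; rewrite s1'.
  - by apply: perm_swap1 => // x; rewrite !inE orbC.
  - by apply: geS_set_nth => //; rewrite s2'.
set T := set_nth 0 Z'.1 k.-1 (nth 0 Z'.2 l.-1) in EL *.
set B := set_nth 0 Z'.2 l.-1 (nth 0 Z'.1 k.-1) in EL *.
set M := [:: nth 0 Z'.1 k.-1; nth 0 Z'.2 l.-1] in EL *.
have sT : size T = m' by rewrite size_set_nth (maxn_idPr hk1).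
have sB : size B = m' by rewrite size_set_nth (maxn_idPr hl1).
have eT i : ent T i = if i == k then Fin (nth 0 Z'.2 l.-1) else ent Z'.1 i.
  by rewrite ent_set // prednK.
have eB i : ent B i = if i == l then Fin (nth 0 Z'.1 k.-1) else ent Z'.2 i.
  by rewrite ent_set // prednK.
have fc : ent Z'.1 k = Fin (nth 0 Z'.1 k.-1) by rewrite ent_fin // hk0 s1'.
have fd : ent Z'.2 l = Fin (nth 0 Z'.2 l.-1) by rewrite ent_fin // hl0 s2'.
have DZ : Sbar Z Z /\ defect Z = 1%R.
  split; last exact: def_one s1 s2.
  by exists [::]; split => //; rewrite move_nil.
have DZ' : Sbar Z' (move Z' M) /\ defect (move Z' M) = 0%R.
  split; last by rewrite EL; exact: (@def_zero (T, B) m' sT sB).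
  exists M; split => //; move=> x; rewrite !inE => /orP [] /eqP -> //.
have DE : defect (move Z' M) = (1 - defect Z)%R.
  by rewrite EL; exact: (@defZ Z (T, B) m m' s1 s2 sT sB).
have EL1 : (move Z' M).1 = T by rewrite EL.
have EL2 : (move Z' M).2 = B by rewrite EL.
move: BA => [_]; rewrite s1' s2 s2' => BA.
rewrite /Dset /Bplus EL1 EL2 sT sB s1' s2.
clear EL EL1 EL2 HD Hc Hd WF1 WF2 WF3 WF4.
split => [[[_ HB] _ _]|R]; last first.
  split => //; split; first exact: DE.
  case: hm BA R => Em BA R; rewrite Em in BA R *.
  - rewrite eqxx in BA R *; case: BA => BA1 BA2.
    case: hlk => El; [subst l | subst k].
    + rewrite eqxx in R; case/andP: R => r1 r2.
      split=> i hi; [rewrite eB | rewrite eT]; case: eqP hi => [->|_] hi.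
      * split; first by rewrite -fc.
        rewrite -fc; exact: ext_le_trans (proj2 (BA1 k hi)) (sp0_le1 sZ' (introT andP (conj hk0 hkm))).
      * exact: BA1.
      * split; last by rewrite -fd.
        rewrite -fd; exact: ext_le_lt_trans (sp0_le1 sZ' (introT andP (conj hk0 hkm))) (proj1 (BA2 k hi)).
      * exact: BA2.
    + rewrite (ltn_eqF (ltnSn l)) in R; case/andP: R => r1 r2.
      have E1 : l.+1.-1 = l by [].
      rewrite E1 in r2.
      split=> i hi; [rewrite eB | rewrite eT]; case: eqP hi => [->|_] hi.
      * split; last by rewrite -fc.
        rewrite -fc; exact: ext_le_lt_trans (sp0_le2 sZ' (introT andP (conj hl0 hkm))) (proj1 (BA1 l hi)).
      * exact: BA1.
      * split; first by rewrite -fd E1 ent_entb.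
        rewrite -fd; exact: ext_le_trans (proj2 (BA2 l.+1 hi)) (sp0_le2 sZ' (introT andP (conj hl0 hkm))).
      * exact: BA2.
  - have Ef : (m.+1 == m) = false by rewrite eqn_leq ltnn.
    rewrite Ef in BA R *; case: BA => BA1 BA2.
    case: hlk => El; [subst l | subst k].
    + rewrite eqxx in R; case/andP: R => r1 r2.
      split=> i hi; [rewrite eB | rewrite eT]; case: eqP hi => [->|_] hi.
      * split; first by rewrite -fc.
        rewrite -fc; exact: ext_lt_le_trans (proj2 (BA1 k hi)) (sp0_le1 sZ' (introT andP (conj hk0 hkm))).
      * exact: BA1.
      * split; last by rewrite -fd.
        rewrite -fd; exact: ext_le_trans (sp0_le1 sZ' (introT andP (conj hk0 hkm))) (proj1 (BA2 k hi)).
      * exact: BA2.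
    + rewrite (ltn_eqF (ltnSn l)) in R; case/andP: R => r1 r2.
      have E1 : l.+1.-1 = l by [].
      rewrite E1 in r2.
      split=> i hi; [rewrite eB | rewrite eT]; case: eqP hi => [->|_] hi.
      * split; last by rewrite -fc.
        rewrite -fc; exact: ext_le_trans (sp0_le2 sZ' (introT andP (conj hl0 hkm))) (proj1 (BA1 l hi)).
      * exact: BA1.
      * split; first by rewrite -fd E1 ent_entb.
        rewrite -fd; exact: ext_lt_le_trans (proj2 (BA2 l.+1 hi)) (sp0_le2 sZ' (introT andP (conj hl0 hkm))).
      * exact: BA2.
move: HB; case: hm => Em; rewrite Em.
- rewrite eqxx => -[H1 H2].
  case: hlk => El; [subst l | subst k].
  + have hkk : 0 < k <= m by rewrite hk0 -Em.
    have [h1 _] := H1 k hkk; rewrite eB eqxx -fc in h1.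
    have [_ h2] := H2 k hkk; rewrite eT eqxx -fd in h2.
    by rewrite eqxx h1 h2.
  + have hll : 0 < l <= m by rewrite hl0 -Em.
    have hkk : 0 < l.+1 <= m by rewrite -Em.
    have [_ h1] := H1 l hll; rewrite eB eqxx -fc in h1.
    have [h2 _] := H2 l.+1 hkk; rewrite eT eqxx -fd in h2.
    have E1 : l.+1.-1 = l by [].
    rewrite (ltn_eqF (ltnSn l)) E1 h1 /=; by rewrite E1 ent_entb in h2.
- have Ef : (m.+1 == m) = false by rewrite eqn_leq ltnn.
  rewrite Ef => -[H1 H2].
  case: hlk => El; [subst l | subst k].
  + have hkk : 0 < k <= m.+1 by rewrite hk0 -Em.
    have [h1 _] := H1 k hkk; rewrite eB eqxx -fc in h1.
    have [_ h2] := H2 k hkk; rewrite eT eqxx -fd in h2.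
    by rewrite eqxx h1 h2.
  + have hll : 0 < l <= m.+1 by rewrite hl0 -Em.
    have hkk : 0 < l.+1 <= m.+1 by rewrite -Em.
    have [_ h1] := H1 l hll; rewrite eB eqxx -fc in h1.
    have [h2 _] := H2 l.+1 hkk; rewrite eT eqxx -fd in h2.
    have E1 : l.+1.-1 = l by [].
    rewrite (ltn_eqF (ltnSn l)) E1 h1 /=; by rewrite E1 ent_entb in h2.
Qed.
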